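(* Let $k,m\in\mathbb{N}$ with $m<k\le 2m$, $k$ even, and $\gcd(2k+1,2(2m+1))=1$; let $a>0$ satisfy $\frac{1}{4km+3k+m+1}\le\frac{a}{2k+1}\le\frac{1}{4km+k+3m+1}$. For $s=0,\dots,4m+1$, $n=0,\dots,2k$ define $X_{sn}=\frac{s}{2(2m+1)}-\frac{n}{2k+1}$, $\Phi_{sn}=\sum_{l\in\mathbb{Z}}Q_2\big(2a(2m+1)(l+X_{sn})\big)$ with $Q_2(x)=(1-|x|)\chi_{[-1,1]}(x)$, and $A_{sn}=\Phi_{sn}-\Phi_{s,2k+1-n}$ for $n=1,\dots,k$. Then $A_{mn}=A_{m+1,n}$ for all $n=1,\dots,k$. *)

(* Defs.v *)
From Stdlib Require Import Reals Lra Lia ZArith Arith.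
From Coquelicot Require Import Coquelicot.
Open Scope R_scope.

Definition Q2 (x : R) : R :=
  if Rle_dec (Rabs x) 1 then 1 - Rabs x else 0.

(* Bilateral sum over l in Z: sum over l >= 0 plus sum over l <= -1.
   (For the summands used below only finitely many terms are nonzero.) *)
Definition sumZ (f : Z -> R) : R :=
  Series (fun l : nat => f (Z.of_nat l)) +
  Series (fun l : nat => f (- Z.of_nat (S l))%Z).

Definition Xsn (k m s n : nat) : R :=
  INR s / (2 * (2 * INR m + 1)) - INR n / (2 * INR k + 1).

Definition Phi (k m : nat) (a : R) (s n : nat) : R :=
  sumZ (fun l => Q2 (2 * a * (2 * INR m + 1) * (IZR l + Xsn k m s n))).

Definition Asn (k m : nat) (a : R) (s n : nat) : R :=
  Phi k m a s n - Phi k m a s (2 * k + 1 - n)%nat.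

(* Main.v *)
Require Import Defs.
From Stdlib Require Import Reals Lra Lia ZArith Arith Psatz.
From Coquelicot Require Import Coquelicot.
Open Scope R_scope.

Lemma series2 (f : nat -> R) :
  (forall n, (2 <= n)%nat -> f n = 0) -> Series f = f 0%nat + f 1%nat.
Proof.
  intros Hf. unfold Series.
  rewrite (Lim_seq_ext_loc _ (fun _ => f 0%nat + f 1%nat)).
  - rewrite Lim_seq_const. reflexivity.
  - exists 1%nat. intros N HN. induction N as [|N IH]; [lia|].
    destruct N as [|N].
    + rewrite sum_Sn, sum_O. reflexivity.
    + rewrite sum_Sn, IH; [|lia]. rewrite (Hf (S (S N))); [|lia].
      unfold plus; simpl. ring.
Qed.

Lemma Q2_pos x : 0 <= x <= 1 -> Q2 x = 1 - x.
Proof. intros H. unfold Q2. rewrite Rabs_pos_eq by lra.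
  destruct (Rle_dec x 1); lra. Qed.
Lemma Q2_neg x : -1 <= x <= 0 -> Q2 x = 1 + x.
Proof. intros H. unfold Q2. rewrite Rabs_left1 by lra.
  destruct (Rle_dec (- x) 1); lra. Qed.
Lemma Q2_hi x : 1 <= x -> Q2 x = 0.
Proof. intros H. unfold Q2. rewrite Rabs_pos_eq by lra.
  destruct (Rle_dec x 1); lra. Qed.
Lemma Q2_lo x : x <= -1 -> Q2 x = 0.
Proof. intros H. unfold Q2. rewrite Rabs_left1 by lra.
  destruct (Rle_dec (- x) 1); lra. Qed.
Lemma Q2_even x : Q2 (- x) = Q2 x.
Proof. unfold Q2. rewrite Rabs_Ropp. reflexivity. Qed.

Definition H (c x : R) := Q2 (c * (x - 1)) + Q2 (c * x) + Q2 (c * (x + 1)).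

Lemma H_even c x : H c (- x) = H c x.
Proof.
  unfold H.
  replace (c * (- x - 1)) with (- (c * (x + 1))) by ring.
  replace (c * (- x)) with (- (c * x)) by ring.
  replace (c * (- x + 1)) with (- (c * (x - 1))) by ring.
  rewrite !Q2_even. ring.
Qed.

Lemma sumZ_H c x : 1 < c -> -1 < x < 1 ->
  sumZ (fun l => Q2 (c * (IZR l + x))) = H c x.
Proof.
  intros Hc Hx. unfold sumZ.
  rewrite series2.
  2:{ intros n Hn. rewrite <- INR_IZR_INZ. apply Q2_hi.
      assert (2 <= INR n) by (apply (le_INR 2); lia). nra. }
  rewrite series2.
  2:{ intros n Hn. rewrite opp_IZR, <- INR_IZR_INZ. apply Q2_lo.
      assert (2 <= INR (S n)) by (apply (le_INR 2); lia). nra. }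
  rewrite (Q2_lo (c * (IZR (- Z.of_nat 2) + x))).
  2:{ rewrite opp_IZR, <- INR_IZR_INZ. simpl INR. nra. }
  change (Z.of_nat 0) with 0%Z. change (Z.of_nat 1) with 1%Z.
  unfold H.
  replace (c * (IZR 0 + x)) with (c * x) by ring.
  replace (c * (IZR 1 + x)) with (c * (x + 1)) by ring.
  rewrite opp_IZR. replace (c * (- IZR 1 + x)) with (c * (x - 1)) by ring.
  lra.
Qed.

Ltac q2solve :=
  repeat match goal with |- context [Q2 ?x] =>
    first [rewrite (Q2_lo x) by nra | rewrite (Q2_hi x) by nra
          | rewrite (Q2_pos x) by nra | rewrite (Q2_neg x) by nra] end;
  lra.

Lemma pair_sum c d y t : 0 < c -> 0 <= d -> c * (1 - d) <= 2 -> 2 <= c * (1 + d) ->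
  -1 < y < /2 -> IZR t + d <= 2 * y <= IZR t + 1 - d ->
  H c y + H c (y + /2) = 2 - c / 2.
Proof.
  intros Hc Hd H1 H2 Hy [Ht1 Ht2].
  assert (Ta : (t < 1)%Z) by (apply lt_IZR; lra).
  assert (Tb : (-3 < t)%Z) by (apply lt_IZR; lra).
  assert (t = 0 \/ t = -1 \/ t = -2)%Z as [-> | [-> | ->]] by lia; unfold H.
  - q2solve.
  - q2solve.
  - q2solve.
Qed.

Lemma zlem (m k p : Z) : (0 <= m)%Z -> (m < k)%Z -> (k <= 2*m)%Z ->
  (exists e, p = m*(2*k+1) + (2*m+1)*e)%Z ->
  exists t, (t*((2*m+1)*(2*k+1)) + (k-m) <= p <= (t+1)*((2*m+1)*(2*k+1)) - (k-m))%Z.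
Proof.
  intros H0 H1 H2 [e He].
  set (N := ((2*m+1)*(2*k+1))%Z).
  assert (HN : (0 < N)%Z) by (unfold N; nia).
  exists (p / N)%Z.
  pose proof (Z.div_mod p N ltac:(lia)) as Hd.
  pose proof (Z.mod_pos_bound p N HN) as Hb.
  set (t := (p / N)%Z) in *. set (r := (p mod N)%Z) in *.
  set (q := (k + e - t*(2*k+1))%Z).
  assert (Hq : (r + (k - m) = (2*m+1)*q)%Z) by (unfold q, N in *; nia).
  split.
  - destruct (Z.le_gt_cases q 0); nia.
  - destruct (Z.le_gt_cases q (2*k+1)); nia.
Qed.

Lemma div_bounds (t e P N : R) : 0 < N -> t*N + e <= P <= (t+1)*N - e ->
  t + e/N <= P/N <= t + 1 - e/N.
Proof.
  intros HN [H1 H2].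
  assert (Heq : P / N = t + (P - t*N)/N) by (field; lra). rewrite Heq.
  assert (e/N <= (P - t*N)/N) by (apply Rmult_le_compat_r; [left; apply Rinv_0_lt_compat; lra | lra]).
  assert ((P - t*N)/N <= 1 - e/N).
  { replace (1 - e/N) with ((N - e)/N) by (field; lra).
    apply Rmult_le_compat_r; [left; apply Rinv_0_lt_compat; lra | lra]. }
  lra.
Qed.

Ltac zr H := repeat (rewrite minus_IZR in H || rewrite plus_IZR in H || rewrite mult_IZR in H);
  repeat rewrite <- INR_IZR_INZ in H.

Lemma INR2 : INR 2 = 2. Proof. simpl; lra. Qed.
Lemma INR3 : INR 3 = 3. Proof. simpl; lra. Qed.
Lemma INR4 : INR 4 = 4. Proof. simpl; lra. Qed.

Theorem lemma3p13 (k m : nat) (a : R) :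
  (m < k <= 2 * m)%nat ->
  Nat.Even k ->
  Nat.gcd (2 * k + 1) (2 * (2 * m + 1)) = 1%nat ->
  0 < a ->
  1 / INR (4 * k * m + 3 * k + m + 1) <= a / INR (2 * k + 1) ->
  a / INR (2 * k + 1) <= 1 / INR (4 * k * m + k + 3 * m + 1) ->
  forall n : nat, (1 <= n <= k)%nat ->
    Asn k m a m n = Asn k m a (m + 1) n.
Proof.
  intros [Hmk Hkm] _ _ Ha H1 H2 n [Hn1 Hnk].
  rewrite !plus_INR, !mult_INR in H1.
  rewrite !plus_INR, !mult_INR in H2.
  rewrite ?INR4, ?INR3, ?INR2, ?INR_1 in H1, H2.
  assert (HM : 0 <= INR m) by apply pos_INR.
  assert (HKM : INR m + 1 <= INR k) by (rewrite <- S_INR; apply le_INR; lia).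
  assert (HK2 : INR k <= 2 * INR m) by (rewrite <- INR2, <- mult_INR; apply le_INR; lia).
  assert (Hn1' : 1 <= INR n) by (apply (le_INR 1); lia).
  assert (HnK : INR n <= INR k) by (apply le_INR; lia).
  set (M := INR m) in *. set (K := INR k) in *. set (Nn := INR n) in *.
  set (N := (2*M+1)*(2*K+1)).
  assert (HN : 0 < N) by (unfold N; nra).
  set (al := a / (2*K+1)) in *.
  assert (Hal : a = al * (2*K+1)) by (unfold al; field; lra).
  set (D1 := 4 * K * M + 3 * K + M + 1) in *.
  set (D2 := 4 * K * M + K + 3 * M + 1) in *.
  assert (HD1 : 0 < D1) by (unfold D1; nra).
  assert (HD2 : 0 < D2) by (unfold D2; nra).
  assert (A1 : 1 <= al * D1).
  { replace 1 with (1 / D1 * D1) by (field; lra).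
    apply Rmult_le_compat_r; lra. }
  assert (A2 : al * D2 <= 1).
  { replace 1 with (1 / D2 * D2) by (field; lra).
    apply Rmult_le_compat_r; lra. }
  set (c := 2 * a * (2 * M + 1)).
  set (d := (K - M) / N).
  assert (Hc : c = 2 * al * N) by (unfold c, N; rewrite Hal; ring).
  assert (Hc1 : c * (1 - d) <= 2).
  { replace (c * (1 - d)) with (2 * (al * D2)) by (rewrite Hc; unfold d, D2, N; field; lra). lra. }
  assert (Hc2 : 2 <= c * (1 + d)).
  { replace (c * (1 + d)) with (2 * (al * D1)) by (rewrite Hc; unfold d, D1, N; field; lra). lra. }
  assert (Hal0 : 0 < al) by (unfold al; apply Rdiv_lt_0_compat; lra).
  assert (Hcgt : 1 < c).
  { rewrite Hc. assert (al * D1 = al * N + al * (K - M)) by (unfold D1, N; ring).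
    assert (al * (K - M) < al * N) by (apply Rmult_lt_compat_l; [lra | unfold N; nra]). lra. }
  assert (Hd0 : 0 <= d) by (unfold d; apply Rmult_le_pos; [lra | left; apply Rinv_0_lt_compat; lra]).
  set (u := M / (2 * (2 * M + 1))).
  set (v := Nn / (2 * K + 1)).
  assert (Hu : u * (2 * (2 * M + 1)) = M) by (unfold u; field; lra).
  assert (Hv : v * (2 * K + 1) = Nn) by (unfold v; field; lra).
  assert (Hu0 : 0 <= u) by (unfold u; apply Rmult_le_pos; [lra | left; apply Rinv_0_lt_compat; lra]).
  assert (Hu1 : u < /4) by nra.
  assert (Hv0 : 0 < v) by (unfold v; apply Rdiv_lt_0_compat; lra).
  assert (Hv1 : v < /2) by nra.
  assert (E1 : Xsn k m m n = u - v) by reflexivity.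
  assert (E2 : Xsn k m m (2 * k + 1 - n) = u + v - 1).
  { unfold Xsn. rewrite minus_INR by lia. rewrite plus_INR, mult_INR, INR2, ?INR_1.
    fold M K Nn. unfold u, v. field. lra. }
  assert (E3 : Xsn k m (m + 1) n = - ((u + v - 1) + /2)).
  { unfold Xsn. rewrite plus_INR. fold M K Nn. unfold u, v. rewrite ?INR_1. field. lra. }
  assert (E4 : Xsn k m (m + 1) (2 * k + 1 - n) = - ((u - v) + /2)).
  { unfold Xsn. rewrite minus_INR by lia. rewrite !plus_INR, mult_INR, INR2, ?INR_1.
    fold M K Nn. unfold u, v. rewrite ?INR_1. field. lra. }
  unfold Asn, Phi. rewrite E1, E2, E3, E4. fold M c.
  rewrite !sumZ_H by lra.
  rewrite !H_even.
  assert (Z1 : exists t, IZR t + d <= 2 * (u - v) <= IZR t + 1 - d).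
  { destruct (zlem (Z.of_nat m) (Z.of_nat k)
      (Z.of_nat m * (2 * Z.of_nat k + 1) - 2 * Z.of_nat n * (2 * Z.of_nat m + 1)))
      as [t [Ht1 Ht2]]; try lia.
    { exists (- (2 * Z.of_nat n))%Z. ring. }
    exists t. apply IZR_le in Ht1. apply IZR_le in Ht2.
    zr Ht1. zr Ht2. fold M K Nn in Ht1, Ht2.
    replace (2 * (u - v)) with ((M * (2 * K + 1) - 2 * Nn * (2 * M + 1)) / N)
      by (unfold u, v, N; field; lra).
    unfold d. apply div_bounds; [lra|]. fold N in Ht1, Ht2. lra. }
  assert (Z2 : exists t, IZR t + d <= 2 * (u + v - 1) <= IZR t + 1 - d).
  { destruct (zlem (Z.of_nat m) (Z.of_nat k)
      (Z.of_nat m * (2 * Z.of_nat k + 1) + 2 * Z.of_nat n * (2 * Z.of_nat m + 1)))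
      as [t [Ht1 Ht2]]; try lia.
    { exists (2 * Z.of_nat n)%Z. ring. }
    exists (t - 2)%Z. apply IZR_le in Ht1. apply IZR_le in Ht2.
    zr Ht1. zr Ht2. fold M K Nn in Ht1, Ht2. rewrite minus_IZR.
    replace (2 * (u + v - 1)) with ((M * (2 * K + 1) + 2 * Nn * (2 * M + 1)) / N - 2)
      by (unfold u, v, N; field; lra).
    assert (IZR t + (K - M) / N <= (M * (2 * K + 1) + 2 * Nn * (2 * M + 1)) / N
       <= IZR t + 1 - (K - M) / N).
    { apply div_bounds; [lra|]. fold N in Ht1, Ht2. lra. }
    unfold d. lra. }
  destruct Z1 as [t1 Ht1]. destruct Z2 as [t2 Ht2].
  assert (P1 : H c (u - v) + H c (u - v + /2) = 2 - c / 2)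
    by (apply (pair_sum c d _ t1); lra).
  assert (P2 : H c (u + v - 1) + H c (u + v - 1 + /2) = 2 - c / 2)
    by (apply (pair_sum c d _ t2); lra).
  lra.
Qed.
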